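(* Let $n,m\in\mathbb Z$ and $k\ge0$. Then, in $\mathbb C_w[x,x^{-1},y,y^{-1}]$, \[ \binom{n+m}{k}_w=\sum_{j=0}^{k}\binom{n}{j}_w\Big(x^jy^{n-j}\,\binom{m}{k-j}_w\,y^{j-n}x^{-j}\Big)\prod_{i=1}^{k-j}W(i+j,n-j), \] and this is an identity in the commutative ring $\mathbb C[(w(s,t))_{s,t\in\mathbb Z}]$ (after evaluating the conjugations).
   Context: Let $(w(s,t))_{s,t\in\mathbb Z}$ be commuting invertible variables, and $\mathbb C_w[x,x^{-1},y,y^{-1}]$ the associative unital $\mathbb C$-algebra generated by $x^{\pm1},y^{\pm1}$ and the $w(s,t)^{\pm1}$ subject to $x^{-1}x=xx^{-1}=1$, $y^{-1}y=yy^{-1}=1$, $yx=w(1,1)xy$, $x\,w(s,t)=w(s+1,t)x$, $y\,w(s,t)=w(s,t+1)y$. (Consequently, for any expression $f$ in the weights, $x^jy^{n-j}fy^{j-n}x^{-j}$ is $f$ with each $w(s,t)$ replaced by $w(s+j,t+n-j)$.) Product convention: $\prod_{j=l}^m A_j=A_l\cdots A_m$ if $m>l-1$, $=1$ if $m=l-1$, $=A_{l-1}^{-1}\cdots A_{m+1}^{-1}$ if $m<l-1$. $W(s,t)=\prod_{j=1}^tw(s,j)$. $\binom nk_w$ ($n,k\in\mathbb Z$) is the unique family with $\binom n0_w=\binom nn_w=1$ for all $n$ and $\binom{n+1}{k}_w=\binom nk_w+\binom n{k-1}_wW(k,n+1-k)$ whenever $(n+1,k)\ne(0,0)$. *)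

(* Defs.v *)
From mathcomp Require Import all_boot all_order all_algebra.
Set Implicit Arguments. Unset Strict Implicit. Unset Printing Implicit Defensive.
Import Order.TTheory GRing.Theory Num.Theory.
Local Open Scope ring_scope.

(* Product convention over integer bounds:
   prod_{j=l}^m A_j = A_l ... A_m            if m > l-1,
                    = 1                      if m = l-1,
                    = A_{l-1}^-1 ... A_{m+1}^-1  if m < l-1.
   (The ring is commutative, so the order of factors is irrelevant.) *)
Definition iprod (R : comUnitRingType) (l m : int) (A : int -> R) : R :=
  if l - 1 <= m then \prod_(i < absz (m - l + 1)%R) A (l + (i : nat)%:Z)
  else \prod_(i < absz (l - 1 - m)%R) (A (m + 1 + (i : nat)%:Z))^-1.

Definition bigW (R : comUnitRingType) (v : int -> int -> R) (s t : int) : R :=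
  iprod 1 t (fun j => v s j).

Definition is_wbinom (R : comUnitRingType) (v : int -> int -> R)
    (b : int -> int -> R) : Prop :=
  (forall n : int, b n 0 = 1) /\
  (forall n : int, b n n = 1) /\
  (forall n k : int, (n + 1, k) <> (0, 0) ->
     b (n + 1) k = b n k + b n (k - 1) * bigW v k (n + 1 - k)).

(* Conjugation x^a y^b f y^-b x^-a = f with w(s,t) replaced by w(s+a,t+b). *)
Definition shiftw (R : Type) (v : int -> int -> R) (a b : int) : int -> int -> R :=
  fun s t => v (s + a) (t + b).

(* Main.v *)
Require Import Defs.
From mathcomp Require Import all_boot all_order all_algebra.
From mathcomp Require Import ring lra zify.
Import Order.TTheory GRing.Theory Num.Theory.
Local Open Scope ring_scope.

Lemma int_ind2 (P : int -> Prop) (a : int) : P a ->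
  (forall t, P t -> P (t + 1)) -> (forall t, P (t + 1) -> P t) -> forall t, P t.
Proof.
move=> Pa Hu Hd t.
have -> : t = a + (t - a) by ring.
case: (t - a) => nn.
  elim: nn => [|nn IH]; first by rewrite addr0.
  by rewrite (_ : a + nn.+1%:Z = a + nn%:Z + 1); [apply: Hu | lia].
rewrite NegzE; elim: nn => [|nn IH].
  by apply: Hd; rewrite (_ : a + - 1%:Z + 1 = a); [|ring].
by apply: Hd; rewrite (_ : a + - nn.+2%:Z + 1 = a + - nn.+1%:Z); [|lia].
Qed.

Lemma rec_uniq (R : comUnitRingType) (f g u : int -> R) (a : int) :
  (forall t, u t \is a GRing.unit) -> f a = g a ->
  (forall t, f (t + 1) = f t * u t) -> (forall t, g (t + 1) = g t * u t) ->
  forall t, f t = g t.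
Proof.
move=> hu ha hf hg; apply: (@int_ind2 _ (a)) => // t.
  by move=> e; rewrite hf hg e.
by rewrite hf hg => e; apply: (mulIr (hu t)).
Qed.

Section Iprod.
Variable R : comUnitRingType.

Lemma iprod_pos l n (A : int -> R) :
  iprod l (l - 1 + n%:Z) A = \prod_(i < n) A (l + i%:Z).
Proof.
rewrite /iprod ifT; last by rewrite lerDl.
by rewrite (_ : l - 1 + n%:Z - l + 1 = n%:Z); [|ring].
Qed.

Lemma iprod_neg l n (A : int -> R) :
  iprod l (l - 1 - n.+1%:Z) A =
  \prod_(i < n.+1) (A (l - 1 - n.+1%:Z + 1 + i%:Z))^-1.
Proof.
rewrite /iprod ifF; last by apply/negbTE; lia.
by rewrite (_ : l - 1 - (l - 1 - n.+1%:Z) = n.+1%:Z); [|ring].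
Qed.

Lemma iprod_empty l (A : int -> R) : iprod l (l - 1) A = 1.
Proof. by rewrite -[l - 1]addr0 iprod_pos big_ord0. Qed.

Lemma iprodS l m (A : int -> R) : (forall i, A i \is a GRing.unit) ->
  iprod l (m + 1) A = iprod l m A * A (m + 1).
Proof.
move=> hA.
have hm : m = l - 1 + (m - (l - 1)) by ring.
move: (m - (l - 1)) hm => d -> {m}.
case: d => nn.
  rewrite (_ : l - 1 + nn%:Z + 1 = l - 1 + nn.+1%:Z); last by lia.
  rewrite !iprod_pos big_ord_recr /=; congr (_ * A _); lia.
rewrite NegzE; case: nn => [|nn].
  rewrite (_ : l - 1 + - 1%:Z + 1 = l - 1); last by ring.
  rewrite iprod_empty iprod_neg big_ord1 /=.
  have e : forall x y, x = y -> 1 = (A x)^-1 * A y by move=> x y ->; rewrite mulVr.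
  by apply: e; ring.
rewrite (_ : l - 1 + - nn.+2%:Z + 1 = l - 1 - nn.+1%:Z); last by lia.
rewrite !iprod_neg [X in _ = X * _]big_ord_recl /= mulrAC.
have e : forall x y, x = y -> (A x)^-1 * A y = 1 by move=> x y ->; rewrite mulVr.
rewrite e ?mul1r; last by lia.
apply: eq_bigr => i _; congr (A _)^-1; rewrite /bump /=; lia.
Qed.

Lemma iprod_unit l m (A : int -> R) : (forall i, A i \is a GRing.unit) ->
  iprod l m A \is a GRing.unit.
Proof.
move=> hA; move: m; apply: (@int_ind2 _ (l - 1)).
- by rewrite iprod_empty unitr1.
- by move=> t ht; rewrite iprodS // unitrM ht hA.
- by move=> t; rewrite iprodS // unitrM => /andP[].
Qed.

Lemma iprod_shift l m c (A : int -> R) : (forall i, A i \is a GRing.unit) ->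
  iprod l m (fun i => A (i + c)) = iprod (l + c) (m + c) A.
Proof.
move=> hA; move: m.
apply: (@rec_uniq _ _ _ (fun t => A (t + 1 + c)) (l - 1)) => //.
- rewrite iprod_empty (_ : l - 1 + c = l + c - 1); last by ring.
  by rewrite iprod_empty.
- by move=> t; rewrite iprodS.
- move=> t; rewrite (_ : t + 1 + c = (t + c) + 1); last by ring.
  by rewrite iprodS.
Qed.

Lemma iprod_cat l a b (A : int -> R) : (forall i, A i \is a GRing.unit) ->
  iprod l a A * iprod (a + 1) b A = iprod l b A.
Proof.
move=> hA; move: b.
apply: (@rec_uniq _ _ _ (fun t => A (t + 1)) (a)) => //.
- have -> : iprod (a + 1) a A = 1.
    by rewrite {2}(_ : a = a + 1 - 1) ?iprod_empty //; ring.
  by rewrite mulr1.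
- by move=> t; rewrite iprodS // mulrA.
- by move=> t; rewrite iprodS.
Qed.

End Iprod.

Lemma wbinom_zero (R : comUnitRingType) (v : int -> int -> R) b :
  is_wbinom v b -> forall d n : nat, b n%:Z (n%:Z + d%:Z + 1) = 0.
Proof.
move=> [b0 [bn brec]]; elim=> [|d IH] n.
  have := brec n%:Z (n%:Z + 1).
  rewrite bn (_ : n%:Z + 1 - 1 = n%:Z); last by ring.
  rewrite bn (_ : n%:Z + 1 - (n%:Z + 1) = 1 - 1); last by ring.
  rewrite /bigW iprod_empty mulr1 addr0 => h.
  have {}h := h (ltac:(move=> [e _]; lia)).
  apply: (addIr 1); rewrite add0r; exact: esym.
have := brec n%:Z (n%:Z + d.+1%:Z + 1).
have := IH n.+1; rewrite (_ : n.+1%:Z + d%:Z + 1 = n%:Z + d.+1%:Z + 1); last by lia.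
rewrite (_ : n.+1%:Z = n%:Z + 1); last by lia.
move=> ->.
rewrite (_ : n%:Z + d.+1%:Z + 1 - 1 = n%:Z + d%:Z + 1); last by lia.
rewrite IH mul0r addr0 => h; apply/esym/h; move=> [e _]; lia.
Qed.

Theorem corollary1 (R : comUnitRingType)
    (B : (int -> int -> R) -> int -> int -> R)
    (HB : forall v : int -> int -> R,
        (forall s t, v s t \is a GRing.unit) -> is_wbinom v (B v))
    (w : int -> int -> R) (hw : forall s t, w s t \is a GRing.unit)
    (n m : int) (k : nat) :
  B w (n + m) k%:Z =
  \sum_(j < k.+1)
     B w n (j : nat)%:Z
     * B (shiftw w (j : nat)%:Z (n - (j : nat)%:Z)) m (k%:Z - (j : nat)%:Z)
     * iprod 1 (k%:Z - (j : nat)%:Z)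
         (fun i => bigW w (i + (j : nat)%:Z) (n - (j : nat)%:Z)).
Proof.
have [b0 [bn brec]] := HB w hw.
pose v' (j : nat) := shiftw w j%:Z (n - j%:Z).
have hv' : forall j s t, v' j s t \is a GRing.unit by move=> j s t; exact: hw.
have hW : forall v : int -> int -> R, (forall s t, v s t \is a GRing.unit) ->
    forall s t, bigW v s t \is a GRing.unit.
  by move=> v hv s t; rewrite /bigW; apply: (@iprod_unit R 1 t (fun j => v s j)) => i.
pose P (j : nat) (r : int) := iprod 1 r (fun i => bigW w (i + j%:Z) (n - j%:Z)).
pose G (m : int) (k : nat) := \sum_(j < k.+1) B w n (j : nat)%:Z
   * B (v' j) m (k%:Z - (j : nat)%:Z) * P j (k%:Z - (j : nat)%:Z).
have P0 : forall j, P j 0 = 1 by move=> j; rewrite /P -(subrr (1:int)) iprod_empty.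
have G0 : forall m, G m 0 = 1.
  move=> m0; rewrite /G big_ord1 /= subrr b0 P0.
  have [b0' _] := HB _ (hv' 0%N).
  by rewrite b0' !mulr1.
have key : forall (m : int) (k j : nat), (j <= k)%N ->
    bigW (v' j) (k.+1%:Z - j%:Z) (m + 1 - (k.+1%:Z - j%:Z)) * P j (k.+1%:Z - j%:Z)
    = P j (k%:Z - j%:Z) * bigW w k.+1%:Z (n + m + 1 - k.+1%:Z).
  move=> m0 k0 j hj.
  rewrite /P /bigW /v' /shiftw.
  rewrite (_ : k0.+1%:Z - j%:Z = (k0%:Z - j%:Z) + 1); last by lia.
  rewrite iprodS; last by move=> i; exact: hW.
  rewrite (_ : k0%:Z - j%:Z + 1 + j%:Z = k0.+1%:Z); last by lia.
  have s1 : iprod 1 (m0 + 1 - (k0%:Z - j%:Z + 1)) (fun l => w k0.+1%:Z (l + (n - j%:Z)))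
      = iprod (n - j%:Z + 1) (n + m0 + 1 - k0.+1%:Z) (fun l => w k0.+1%:Z l).
    rewrite (_ : n - j%:Z + 1 = 1 + (n - j%:Z)); last by ring.
    rewrite (_ : n + m0 + 1 - k0.+1%:Z = m0 + 1 - (k0%:Z - j%:Z + 1) + (n - j%:Z)); last by lia.
    by apply: (@iprod_shift R 1 _ (n - j%:Z) (fun l => w k0.+1%:Z l)) => i.
  have c1 : iprod 1 (n - j%:Z) (fun l => w k0.+1%:Z l)
      * iprod (n - j%:Z + 1) (n + m0 + 1 - k0.+1%:Z) (fun l => w k0.+1%:Z l)
      = iprod 1 (n + m0 + 1 - k0.+1%:Z) (fun l => w k0.+1%:Z l).
    by apply: iprod_cat => i.
  rewrite s1 -c1; ring.
have Grec : forall m k, G (m + 1) k.+1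
    = G m k.+1 + G m k * bigW w k.+1%:Z (n + m + 1 - k.+1%:Z).
  move=> m0 k0.
  rewrite /G big_ord_recr [in X in _ = X + _]big_ord_recr /= subrr.
  have [b0' _] := HB _ (hv' k0.+1).
  rewrite !b0' P0 big_distrl /=.
  have -> : \sum_(j < k0.+1) B w n (widen_ord (leqnSn k0.+1) j : nat)%:Z
        * B (v' (widen_ord (leqnSn k0.+1) j : nat)) (m0 + 1)
             (k0.+1%:Z - (widen_ord (leqnSn k0.+1) j : nat)%:Z)
        * P (widen_ord (leqnSn k0.+1) j : nat)
             (k0.+1%:Z - (widen_ord (leqnSn k0.+1) j : nat)%:Z)
      = \sum_(j < k0.+1) (B w n (j : nat)%:Z * B (v' j) m0 (k0.+1%:Z - (j : nat)%:Z)
            * P j (k0.+1%:Z - (j : nat)%:Z)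
          + B w n (j : nat)%:Z * B (v' j) m0 (k0%:Z - (j : nat)%:Z)
            * P j (k0%:Z - (j : nat)%:Z) * bigW w k0.+1%:Z (n + m0 + 1 - k0.+1%:Z)).
    apply: eq_bigr => -[j hj] _ /=.
    have [_ [_ brj]] := HB _ (hv' j).
    rewrite brj; last by move=> [_]; lia.
    rewrite (_ : k0.+1%:Z - j%:Z - 1 = k0%:Z - j%:Z); last by lia.
    rewrite mulrDr mulrDl -[X in _ = _ + X]mulrA -key; last by lia.
    ring.
  rewrite big_split /=.
  ring.
change (B w (n + m) k%:Z = G m k).
suff H : forall m (k : nat), B w (n + m) k%:Z = G m k by exact: H.
apply: (@int_ind2 (fun m => forall k : nat, B w (n + m) k%:Z = G m k) 0).
- move=> k0; rewrite addr0 /G big_ord_recr /= big1 ?add0r.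
    rewrite subrr; have [b0' _] := HB _ (hv' k0).
    by rewrite b0' P0 !mulr1.
  move=> [j hj] _ /=.
  rewrite (_ : k0%:Z - j%:Z = 0%N%:Z + (k0 - j.+1)%N%:Z + 1); last by lia.
  by rewrite (@wbinom_zero _ _ _ (HB _ (hv' j)) _ 0) mulr0 mul0r.
- move=> m0 IH [|k0]; first by rewrite b0 G0.
  rewrite addrA brec; last by move=> [_]; lia.
  rewrite (_ : k0.+1%:Z - 1 = k0%:Z); last by lia.
  by rewrite !IH Grec.
- move=> m0 IH; elim=> [|k0 IHk]; first by rewrite b0 G0.
  have ne : (n + m0 + 1, k0.+1%:Z) <> (0, 0) by move=> [_]; lia.
  have e1 : k0.+1%:Z - 1 = k0%:Z by lia.
  have IH' : forall k', B w (n + m0 + 1) k'%:Z = G (m0 + 1) k' by move=> k'; rewrite -addrA IH.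
  have := brec _ _ ne; rewrite e1 IHk IH' Grec.
  by move/addIr => <-.
Qed.
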